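(* Let $G=(V,E)$ be a finite graph without loops and $e=uv\in E$. Let $G-e$ be the graph obtained from $G$ by removing the edge $e$, and let $G/e$ be the contraction of $e$: $u$ and $v$ are replaced by a single new vertex $w$ whose incident edges are exactly the edges other than $e$ that were incident with $u$ or $v$. Then $$\frac{\gamma_{coe}(G-e)+\gamma_{coe}(G/e)}{2}-1\leq \gamma_{coe}(G)\leq \frac{\gamma_{coe}(G-e)+\gamma_{coe}(G/e)}{2}+2.$$
   Context: Graphs have no loops. For a graph $G=(V,E)$ and $x\in V$, $\deg(x)$ is the number of edges incident to $x$. A set $D\subseteq V$ is a dominating set if every vertex of $V\setminus D$ is adjacent to at least one vertex of $D$. A dominating set $D$ is a co-even dominating set if $\deg(x)$ is even for every $x\in V\setminus D$ (degrees taken in the graph under consideration). The co-even domination number $\gamma_{coe}(G)$ is the minimum cardinality of a co-even dominating set of $G$. *)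

(* Defs.v *)
From HB Require Import structures.
From mathcomp Require Import all_boot all_order all_algebra.
Set Implicit Arguments. Unset Strict Implicit. Unset Printing Implicit Defensive.

Record mgraph := MGraph {
  vtx : finType;
  edg : finType;
  ep1 : edg -> vtx;
  ep2 : edg -> vtx }.

Section Defs.
Variable G : mgraph.

Definition loopless : Prop := forall f : edg G, ep1 f != ep2 f.

Definition joins (f : edg G) (x y : vtx G) : bool :=
  ((ep1 f == x) && (ep2 f == y)) || ((ep1 f == y) && (ep2 f == x)).

Definition adjacent (x y : vtx G) : bool := [exists f : edg G, joins f x y].

Definition incident (x : vtx G) (f : edg G) : bool := (ep1 f == x) || (ep2 f == x).

Definition deg (x : vtx G) : nat := #|[set f : edg G | incident x f]|.

Definition dominating (D : {set vtx G}) : bool :=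
  [forall x : vtx G, (x \notin D) ==> [exists y : vtx G, (y \in D) && adjacent x y]].

Definition co_even_dominating (D : {set vtx G}) : bool :=
  dominating D && [forall x : vtx G, (x \notin D) ==> ~~ odd (deg x)].

(* minimum cardinality of a co-even dominating set (V itself is one, so
   the default #|V| of the min is never below the true minimum) *)
Definition gamma_coe : nat :=
  \big[minn/#|vtx G|]_(D : {set vtx G} | co_even_dominating D) #|D|.

End Defs.

Definition del_edge (G : mgraph) (e : edg G) : mgraph :=
  @MGraph (vtx G) {f : edg G | f != e}
          (fun f => ep1 (val f)) (fun f => ep2 (val f)).

(* G / e : vertices other than the endpoints u, v of e, plus a new vertex w = None;
   edges are the edges other than e, with u and v mapped to w. *)
Definition contr_vtx (G : mgraph) (e : edg G) : finType :=
  option {x : vtx G | (x != ep1 e) && (x != ep2 e)}.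

Definition contr_map (G : mgraph) (e : edg G) (x : vtx G) : contr_vtx e :=
  insub x.

Definition contract (G : mgraph) (e : edg G) : mgraph :=
  @MGraph (contr_vtx e) {f : edg G | f != e}
          (fun f => contr_map e (ep1 (val f))) (fun f => contr_map e (ep2 (val f))).

(* Main.v *)
Require Import Defs.
From HB Require Import structures.
From mathcomp Require Import all_boot all_order all_algebra.
From mathcomp Require Import lra.
Import Order.TTheory GRing.Theory Num.Theory.

Lemma coeT (G : mgraph) : co_even_dominating [set: vtx G].
Proof.
apply/andP; split; [apply/forallP=> x|apply/forallP=> x]; by rewrite in_setT.
Qed.

Lemma bigmin_le_seq (I : eqType) (r : seq I) (P : pred I) (F : I -> nat) x j :
  j \in r -> P j -> \big[minn/x]_(i <- r | P i) F i <= F j.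
Proof.
elim: r => [|a r IH] //; rewrite in_cons big_cons => /orP [/eqP <- Pj|jr Pj].
  by rewrite Pj geq_minl.
case: ifP => _; last exact: IH.
by rewrite geq_min IH ?orbT.
Qed.

Lemma gamma_le (G : mgraph) (D : {set vtx G}) :
  co_even_dominating D -> gamma_coe G <= #|D|.
Proof. by move=> HD; apply: bigmin_le_seq => //; rewrite mem_index_enum. Qed.

Lemma gamma_ex (G : mgraph) :
  exists D : {set vtx G}, co_even_dominating D /\ gamma_coe G = #|D|.
Proof.
rewrite /gamma_coe; apply: (big_ind (fun m => exists D : {set vtx G}, co_even_dominating D /\ m = #|D|)).
- by exists setT; rewrite coeT cardsT.
- move=> x y [D1 [H1 ->]] [D2 [H2 ->]]; rewrite /minn; case: ifP => _; by eauto.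
- by move=> D HD; exists D.
Qed.

Lemma card_subE (G : mgraph) (e : edg G) (P : pred (edg G)) :
  #|[set f : {f : edg G | f != e} | P (val f)]| = #|[set f | P f && (f != e)]|.
Proof.
rewrite -(card_imset _ val_inj); apply: eq_card => f; rewrite inE.
apply/imsetP/idP.
- by case=> g; rewrite inE => Pg ->; rewrite Pg (valP g).
- by case/andP => Pf nf; exists (exist _ f nf); rewrite ?inE.
Qed.

Lemma deg_del (G : mgraph) (e : edg G) (x : vtx G) :
  x != ep1 e -> x != ep2 e -> @deg (del_edge e) x = @deg G x.
Proof.
move=> h1 h2; rewrite /deg (@card_subE _ e (fun f => incident x f)); apply: eq_card => f; rewrite !inE.
case: eqP => [->|]; last by rewrite andbT.
by rewrite andbF; apply/esym/negbTE; rewrite /incident negb_or !(eq_sym _ x) h1 h2.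
Qed.

Lemma cm_None (G : mgraph) (e : edg G) (z : vtx G) :
  (contr_map e z == None) = (z == ep1 e) || (z == ep2 e).
Proof.
rewrite /contr_map; case: insubP => [s Pz _|nPz] //=.
  by case/andP: Pz => /negbTE -> /negbTE ->.
by move: nPz; rewrite negb_and !negbK.
Qed.

Lemma cm_eq (G : mgraph) (e : edg G) (x z : vtx G) :
  x != ep1 e -> x != ep2 e -> (contr_map e z == contr_map e x) = (z == x).
Proof.
move=> h1 h2; have Px : (x != ep1 e) && (x != ep2 e) by rewrite h1 h2.
have -> : contr_map e x = Some (exist _ x Px) by rewrite /contr_map insubT.
rewrite /contr_map; case: insubP => [s Pz <-|nPz] //=.
by apply/esym/negbTE; apply: contra nPz => /eqP ->.
Qed.

Lemma deg_contr (G : mgraph) (e : edg G) (x : vtx G) :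
  x != ep1 e -> x != ep2 e -> @deg (contract e) (contr_map e x) = @deg G x.
Proof.
move=> h1 h2; rewrite /deg.
have -> : [set f | @incident (contract e) (contr_map e x) f] =
  [set f : {f : edg G | f != e} | incident x (val f)].
  by apply/setP => f; rewrite !inE /incident /= !cm_eq.
rewrite (@card_subE _ e (fun f => incident x f)); apply: eq_card => f; rewrite !inE.
case: eqP => [->|]; last by rewrite andbT.
by rewrite andbF; apply/esym/negbTE; rewrite /incident negb_or !(eq_sym _ x) h1 h2.
Qed.

Lemma inc_joins (G : mgraph) (f : edg G) u v :
  u != v -> incident u f -> incident v f -> joins f u v.
Proof.
move=> nuv; rewrite /incident /joins.
by case/orP => /eqP hu; case/orP => /eqP hv; move: nuv; rewrite -hu -hv ?eqxx ?orbT.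
Qed.

Lemma deg_None (G : mgraph) (e : edg G) :
  loopless G -> (forall f : edg G, f != e -> ~~ joins f (ep1 e) (ep2 e)) ->
  @deg (contract e) None + 2 = @deg G (ep1 e) + @deg G (ep2 e).
Proof.
move=> hl hp; rewrite /deg.
have -> : [set f | @incident (contract e) None f] =
  [set f : {f : edg G | f != e} | incident (ep1 e) (val f) || incident (ep2 e) (val f)].
  apply/setP => f; rewrite !inE /incident /= !cm_None.
  by case: (ep1 _ == _); case: (ep1 _ == _); case: (ep2 _ == _); case: (ep2 _ == _).
rewrite (@card_subE _ e (fun f => incident (ep1 e) f || incident (ep2 e) f)) -cardsUI.
have -> : [set f | incident (ep1 e) f] :&: [set f | incident (ep2 e) f] = [set e].
  apply/setP => f; rewrite !inE.
  case: (eqVneq f e) => [->|nfe]; first by rewrite /incident !eqxx !orbT.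
  apply/negbTE; apply/negP => /andP [h1 h2].
  by move/negP: (hp f nfe); apply; apply: inc_joins => //; exact: hl.
rewrite cards1 (cardsD1 e ([set f | incident (ep1 e) f] :|: [set f | incident (ep2 e) f])).
rewrite !inE /incident eqxx /=.
rewrite [1 + _]addnC -addnA; congr (_ + _).
by apply: eq_card => f; rewrite !inE andbC.
Qed.

Lemma coeP (G : mgraph) (D : {set vtx G}) :
  co_even_dominating D <->
  (forall x, x \notin D -> (exists y, y \in D /\ exists f, joins f x y) /\ ~~ odd (deg x)).
Proof.
split.
- case/andP => /forallP Hd /forallP He x xD; split; last by move/implyP: (He x); apply.
  move/implyP: (Hd x) => /(_ xD) /existsP [y /andP [yD /existsP [f hf]]].
  by exists y; split => //; exists f.
- move=> H; apply/andP; split; apply/forallP => x; apply/implyP => xD;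
  have [[y [yD [f hf]]] hev] := H x xD => //.
  by apply/existsP; exists y; rewrite yD; apply/existsP; exists f.
Qed.

Lemma joins_fst (G : mgraph) (f : edg G) x y :
  joins f x y -> (ep1 f == x) || (ep2 f == x).
Proof. by rewrite /joins => /orP [/andP [-> _]|/andP [_ ->]]; rewrite ?orbT. Qed.

Lemma card_add2 (T : finType) (D : {set T}) a b : #|D :|: [set a; b]| <= #|D| + 2.
Proof.
apply: leq_trans (leq_card_setU _ _) _; rewrite leq_add2l cards2; by case: (a != b).
Qed.

Lemma boundA (G : mgraph) (e : edg G) :
  gamma_coe (del_edge e) <= gamma_coe G + 2.
Proof.
have [D [HD ->]] := gamma_ex G.
pose D' : {set vtx (del_edge e)} := D :|: [set ep1 e; ep2 e].
suff HD' : @co_even_dominating (del_edge e) D'.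
  exact: leq_trans (@gamma_le (del_edge e) D' HD') (@card_add2 _ D (ep1 e) (ep2 e)).
apply/coeP => x; rewrite !inE negb_or negb_or => /andP [xD /andP [xu xv]].
have [[y [yD [f hf]]] hev] := (proj1 (coeP _ D) HD) x xD.
split; last by rewrite deg_del.
exists y; split; first by rewrite inE yD.
have nfe : f != e.
  by apply/eqP => fe; move: (joins_fst _ _ _ _ hf); rewrite fe !(eq_sym _ x) (negbTE xu) (negbTE xv).
by exists (exist _ f nfe).
Qed.

Lemma boundC (G : mgraph) (e : edg G) :
  gamma_coe G <= gamma_coe (del_edge e) + 2.
Proof.
have [D [HD ->]] := gamma_ex (del_edge e).
pose D' : {set vtx G} := D :|: [set ep1 e; ep2 e].
suff HD' : @co_even_dominating G D'.
  exact: leq_trans (@gamma_le G D' HD') (@card_add2 _ D (ep1 e) (ep2 e)).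
apply/coeP => x; rewrite !inE negb_or negb_or => /andP [xD /andP [xu xv]].
have [[y [yD [f hf]]] hev] := (proj1 (coeP _ D) HD) x xD.
split; last by rewrite -(@deg_del G e x xu xv).
exists y; split; first by rewrite inE yD.
by exists (val f).
Qed.

Lemma joins_snd (G : mgraph) (f : edg G) x y :
  joins f x y -> (ep1 f == y) || (ep2 f == y).
Proof. by rewrite /joins => /orP [/andP [_ ->]|/andP [-> _]]; rewrite ?orbT. Qed.

Lemma cm_val (G : mgraph) (e : edg G) s : contr_map e (val s) = Some s.
Proof. by rewrite /contr_map valK. Qed.

Lemma joins_contr (G : mgraph) (e : edg G) (f : edg (contract e)) x y :
  joins (val f) x y -> @joins (contract e) f (contr_map e x) (contr_map e y).
Proof.
by rewrite /joins /= => /orP [/andP [/eqP -> /eqP ->]|/andP [/eqP -> /eqP ->]];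
  rewrite !eqxx ?orbT.
Qed.

Lemma joins_contr_inv (G : mgraph) (e : edg G) (f : edg (contract e)) x b :
  x != ep1 e -> x != ep2 e -> @joins (contract e) f (contr_map e x) b ->
  exists y, contr_map e y = b /\ joins (val f) x y.
Proof.
move=> xu xv; rewrite /joins /= => /orP [/andP [h1 /eqP h2]|/andP [/eqP h1 h2]].
- exists (ep2 (val f)); split => //; move: h1; rewrite cm_eq // => ->.
  by rewrite eqxx.
- exists (ep1 (val f)); split => //; move: h2; rewrite cm_eq // => ->.
  by rewrite eqxx orbT.
Qed.

Lemma boundB (G : mgraph) (e : edg G) :
  loopless G -> (forall f : edg G, f != e -> ~~ joins f (ep1 e) (ep2 e)) ->
  gamma_coe (contract e) <= gamma_coe G.
Proof.
move=> hl hp.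
have [D [HD ->]] := gamma_ex G.
pose D' : {set vtx (contract e)} := contr_map e @: D.
suff HD' : @co_even_dominating (contract e) D'.
  exact: leq_trans (@gamma_le (contract e) D' HD') (leq_imset_card _ _).
have HG := proj1 (coeP _ D) HD.
apply/coeP => -[s|] cD.
- have /andP [xu xv] := valP s.
  have xD : val s \notin D.
    by apply: contra cD => xD; rewrite -cm_val; apply: imset_f.
  have [[y [yD [f hf]]] hev] := HG _ xD.
  have nfe : f != e.
    by apply/eqP => fe; move: (joins_fst _ _ _ _ hf); rewrite fe !(eq_sym _ (val s)) (negbTE xu) (negbTE xv).
  split; last by rewrite -(cm_val _ e s) deg_contr.
  exists (contr_map e y); split; first exact: imset_f.
  exists (exist _ f nfe); rewrite -(cm_val _ e s); exact: joins_contr.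
- have cu : contr_map e (ep1 e) = None by apply/eqP; rewrite cm_None eqxx.
  have cv : contr_map e (ep2 e) = None by apply/eqP; rewrite cm_None eqxx orbT.
  have uD : ep1 e \notin D by apply: contra cD => uD; rewrite -cu; apply: imset_f.
  have vD : ep2 e \notin D by apply: contra cD => vD; rewrite -cv; apply: imset_f.
  have [[y [yD [f hf]]] hevu] := HG _ uD.
  have [_ hevv] := HG _ vD.
  have nfe : f != e.
    apply/eqP => fe; move: (joins_snd _ _ _ _ hf); rewrite fe.
    by case/orP => /eqP eq; [move: uD|move: vD]; rewrite eq yD.
  split; last first.
    move: (deg_None _ e hl hp) => /(congr1 odd); rewrite !oddD /= (negbTE hevu) (negbTE hevv).
    by rewrite addbF => ->.
  exists (contr_map e y); split; first exact: imset_f.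
  exists (exist _ f nfe); rewrite -cu; exact: joins_contr.
Qed.

Lemma boundD (G : mgraph) (e : edg G) :
  gamma_coe G <= gamma_coe (contract e) + 2.
Proof.
have [D [HD ->]] := gamma_ex (contract e).
pose X : {set vtx G} := [set y | (contr_map e y \in D) && (y != ep1 e) && (y != ep2 e)].
pose D' : {set vtx G} := X :|: [set ep1 e; ep2 e].
have cX : #|X| <= #|D|.
  rewrite -(@card_in_imset _ _ (contr_map e)).
    apply: subset_leq_card; apply/subsetP => c /imsetP [y]; rewrite inE => /andP [/andP [yD _] _] ->.
    exact: yD.
  move=> y z _; rewrite !inE => /andP [/andP [_ zu] zv] /eqP.
  by rewrite cm_eq // => /eqP.
suff HD' : @co_even_dominating G D'.
  apply: leq_trans (@gamma_le G D' HD') _; apply: leq_trans (@card_add2 _ X (ep1 e) (ep2 e)) _; by rewrite leq_add2r.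
apply/coeP => x; rewrite !inE negb_or negb_or => /andP [xD /andP [xu xv]].
move: xD; rewrite xu xv !andbT => xD.
have [[b [bD [f hf]]] hev] := (proj1 (coeP _ D) HD) _ xD.
split; last by rewrite -(@deg_contr G e x xu xv).
have [y [hy hj]] := joins_contr_inv _ e f x b xu xv hf.
exists y; split; last by exists (val f).
rewrite !inE hy bD /=.
by case: (y == ep1 e); case: (y == ep2 e).
Qed.
Local Open Scope ring_scope.

Theorem mainTheorem7 (G : mgraph) (e : edg G) :
  loopless G ->
  (* no other edge joins the endpoints of e, so that G/e is again loopless *)
  (forall f : edg G, f != e -> ~~ joins f (ep1 e) (ep2 e)) ->
  ((gamma_coe (del_edge e))%:R + (gamma_coe (contract e))%:R) / 2 - 1
    <= (gamma_coe G)%:R :> rat /\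
  (gamma_coe G)%:R
    <= ((gamma_coe (del_edge e))%:R + (gamma_coe (contract e))%:R) / 2 + 2 :> rat.
Proof.
move=> hl hp.
have hA := boundA G e; have hB := boundB G e hl hp.
have hC := boundC G e; have hD := boundD G e.
move: hA hB hC hD; rewrite -!(ler_nat rat) !natrD.
move: (gamma_coe (del_edge e)) (gamma_coe (contract e)) (gamma_coe G) => a b c.
move=> *; split; lra.
Qed.
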